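(* Let $V$ be a population of $n$ individuals with pseudo-metric $d$, and let $k_1\le k_2$ be panel sizes. Let $\mathcal{G}$ and $\mathcal{H}$ be the outputs of the Greedy Capture procedure (defined in the context) with panel sizes $k_1$ and $k_2$ respectively. Then for every group $G\in\mathcal{G}$ with center $c_G$ and radius $r_G$ there exists a group $H\in\mathcal{H}$ with center $c_H$ and radius $r_H$ such that $d(c_H,c_G)\le 2r_G$ and $r_H\le r_G$.
   Context: $B(x,\delta)=\{u\in V: d(x,u)\le\delta\}$. Greedy Capture with panel size $K$ (Modified Greedy Capture with every individual initially its own group): maintain a set $U$ of uncovered individuals, initially $V$, and an output collection initially empty; increase $\delta$ continuously from $0$ while $U\ne\emptyset$. At each $\delta$: for each already formed group with center $c$, remove $U\cap B(c,\delta)$ from $U$; then, while some $x\in V$ has $|U\cap B(x,\delta)|\ge n/K$, form the group $U\cap B(x,\delta)$ with center $x$ and radius $\delta$, add it to the output and remove its members from $U$. Return the output collection. *)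

(* Defs.v *)
From mathcomp Require Import all_boot all_order all_algebra.
Set Implicit Arguments. Unset Strict Implicit. Unset Printing Implicit Defensive.
Import Order.TTheory GRing.Theory Num.Theory.
Local Open Scope ring_scope.

Definition pseudometric (R : realFieldType) (V : finType) (d : V -> V -> R) :=
  [/\ forall x, d x x = 0,
      forall x y, 0 <= d x y,
      forall x y, d x y = d y x
    & forall x y z, d x z <= d x y + d y z].

Definition ball (R : realFieldType) (V : finType) (d : V -> V -> R)
  (x : V) (delta : R) : {set V} := [set u | d x u <= delta].

Definition group (R : realFieldType) (V : finType) := ({set V} * V * R)%type.

Definition gmembers (R : realFieldType) (V : finType) (g : group R V) : {set V} := g.1.1.
Definition gcenter (R : realFieldType) (V : finType) (g : group R V) : V := g.1.2.
Definition gradius (R : realFieldType) (V : finType) (g : group R V) : R := g.2.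

(* The set of points covered (removed from U) at parameter delta by the
   groups of the sequence gs that were formed at a radius <= delta:
   every such group with center c has swallowed U ∩ B(c, delta'),
   for all delta' <= delta, hence covers exactly B(c, delta). *)
Definition covered (R : realFieldType) (V : finType) (d : V -> V -> R) (gs : seq (group R V)) (delta : R)
  : {set V} :=
  \bigcup_(g <- gs | gradius g <= delta) ball d (gcenter g) delta.

(* [gc_run d K out] : [out] is (in order of formation) the output collection
   of a run of Greedy Capture with panel size K on (V, d), n = #|V|.
   - groups are formed at nondecreasing values of delta >= 0;
   - the i-th group, formed at delta = r_i with center c_i, is
     U ∩ B(c_i, r_i), where U is the uncovered set at that moment, i.e.
     V minus the balls B(c_j, r_i) of the previously formed groups, and it
     has at least n/K members (condition of the while loop);
   - the while loop only stops when no x qualifies: at every delta >= 0,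
     after all groups formed at radius <= delta, no x has
     |U ∩ B(x, delta)| >= n/K. *)
Definition gc_run (R : realFieldType) (V : finType) (d : V -> V -> R)
  (K : nat) (out : seq (group R V)) : Prop :=
  let thr : R := (#|V|%:R / K%:R) in
  [/\ sorted <=%R (map (@gradius R V) out),
      all (fun g => 0 <= gradius g) out,
      (forall (pre post : seq (group R V)) (g : group R V),
         out = pre ++ g :: post ->
         gmembers g = ball d (gcenter g) (gradius g)
                        :\: \bigcup_(h <- pre)
                               ball d (gcenter h) (gradius g)
         /\ thr <= #|gmembers g|%:R)
    & forall delta : R, 0 <= delta -> forall x : V,
         #|ball d x delta :\: covered d out delta|%:R < thr].

(* Main.v *)
Require Import Defs.
From mathcomp Require Import all_boot all_order all_algebra.
Import Order.TTheory GRing.Theory Num.Theory.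
Local Open Scope ring_scope.

Lemma bigcup_condP {T : finType} {I : eqType} {s : seq I} {P : pred I} {F : I -> {set T}} {u} :
  u \in \bigcup_(g <- s | P g) F g -> exists g, [/\ g \in s, P g & u \in F g].
Proof.
elim: s => [|a s IH]; first by rewrite big_nil inE.
rewrite big_cons; case: ifP => Pa.
  rewrite inE => /orP [ua|/IH [g [gs Pg ug]]].
    by exists a; rewrite inE eqxx.
  by exists g; rewrite inE gs orbT.
by move=> /IH [g [gs Pg ug]]; exists g; rewrite inE gs orbT.
Qed.

Theorem lemma5 (R : realFieldType) (V : finType) (d : V -> V -> R)
  (k1 k2 : nat) (Gs Hs : seq (group R V)) :
  pseudometric d -> (0 < k1)%N -> (k1 <= k2)%N ->
  gc_run d k1 Gs -> gc_run d k2 Hs ->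
  forall G, G \in Gs ->
    exists2 H, H \in Hs &
      d (gcenter H) (gcenter G) <= 2 * gradius G /\ gradius H <= gradius G.
Proof.
move=> [d0 dge0 dsym dtri] k1pos k12 hG hH G GG.
case: hG => _ Gpos Gmem _.
case: hH => _ _ _ Hstop.
have r0 : 0 <= gradius G.
  by move/allP: Gpos => /(_ G GG).
have : exists pre, exists post, Gs = pre ++ G :: post.
  by case/splitPr: GG => p1 p2; exists p1; exists p2.
move=> [pre [post Gsplit]].
have [Gm Gcard] := Gmem _ _ _ Gsplit.
set c := gcenter G; set r := gradius G.
have sub : gmembers G \subset ball d c r by rewrite Gm subsetDl.
have thr : (#|V|%:R / k2%:R : R) <= #|V|%:R / k1%:R.
  apply: ler_wpM2l; first by rewrite ler0n.
  have h3 : (0 < k2)%N by exact: leq_trans k12.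
  rewrite lef_pV2 ?ler_nat // posrE ltr0n //.
have h2 := Hstop r r0 c.
have : ~~ (ball d c r \subset ball d c r :\: covered d Hs r).
  apply/negP => /subset_leq_card.
  rewrite -(ler_nat R) => h1.
  have h4 := subset_leq_card sub; rewrite -(ler_nat R) in h4.
  have := le_lt_trans (le_trans thr (le_trans Gcard (le_trans h4 h1))) h2.
  by rewrite ltxx.
case/subsetPn => u ub; rewrite inE ub andbT negbK /covered => uc; have [H [HH Hr uH]] := bigcup_condP uc.
exists H => //; split => //.
apply: le_trans (dtri _ u _) _.
rewrite mulr2n mulrDl mul1r.
rewrite inE in ub; rewrite inE in uH.
by apply: lerD => //; rewrite dsym.
Qed.
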